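(* Let $\Sigma$ be a non-empty finite or countably infinite alphabet and let $\mu$ be a probability map over $\Sigma$ that is not induced by any Bernoulli distribution on $\Sigma$. Then there exists a finite word $w\in\Sigma^*$ such that for every $\mu$-distributed $\alpha\in\Sigma^\omega$, the Postnikova strategy $\mathcal S_w=\{vw: v\in\Sigma^*\}$ selects from $\alpha$ an infinite sequence $\mathcal S_w[\alpha]$ that is not $\mu$-distributed.
   Context: A probability map over $\Sigma$ is $\mu:\Sigma^+\to[0,1]$ with $\sum_{w\in\Sigma^n}\mu(w)=1$ for each $n\ge1$ (convention $\mu(\lambda)=1$). $\mu$ is induced by a Bernoulli distribution $p:\Sigma\to[0,1]$ with $\sum_a p(a)=1$ if $\mu(a_1\cdots a_n)=\prod_i p(a_i)$ for all words. $\#_w(v)$ is the number of (possibly overlapping) occurrences of $w$ as a contiguous block in $v$; $\alpha$ is $\mu$-distributed if $\lim_{N\to\infty}\#_w(\alpha|_{\le N})/N=\mu(w)$ for all $w\in\Sigma^+$, where $\alpha|_{\le N}$ is the length-$N$ prefix. For a strategy $S\subseteq\Sigma^*$, $S[\alpha]$ is the subsequence of those $\alpha_i$ with $\alpha_1\cdots\alpha_{i-1}\in S$. *)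

(* Defs.v *)
From HB Require Import structures.
From mathcomp Require Import all_boot all_order all_algebra.
From mathcomp Require Import all_classical all_reals all_analysis.
Set Implicit Arguments. Unset Strict Implicit. Unset Printing Implicit Defensive.
Import Order.TTheory GRing.Theory Num.Theory.
Import numFieldNormedType.Exports.
Local Open Scope classical_set_scope.
Local Open Scope ring_scope.

(* Words over Sigma are [seq Sigma]; infinite sequences are [nat -> Sigma]
   (0-indexed: alpha 0 is the paper's alpha_1). *)

(* A probability map: mu : Sigma^+ -> [0,1], summing to 1 on each Sigma^n,
   n >= 1 (sum taken as a nonnegative extended-real sum, since Sigma may be
   countably infinite), with the convention mu(lambda) = 1. *)
Definition prob_map (R : realType) (Sigma : countType) (mu : seq Sigma -> R) : Prop :=
  mu [::] = 1 /\
  (forall w : seq Sigma, w != [::] -> 0 <= mu w <= 1) /\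
  (forall n : nat, (1 <= n)%N ->
     (\esum_(w in [set w : seq Sigma | size w = n]) (mu w)%:E = 1)%E).

Definition bernoulli_induced (R : realType) (Sigma : countType) (mu : seq Sigma -> R) : Prop :=
  exists p : Sigma -> R,
    (forall a, 0 <= p a <= 1) /\
    (\esum_(a in [set: Sigma]) (p a)%:E = 1)%E /\
    (forall w : seq Sigma, w != [::] -> mu w = \prod_(a <- w) p a).

Definition occ (Sigma : countType) (w v : seq Sigma) : nat :=
  count (fun i => (i + size w <= size v)%N && (take (size w) (drop i v) == w))
        (iota 0 (size v)).

Definition prefix_of (Sigma : Type) (alpha : nat -> Sigma) (N : nat) : seq Sigma :=
  mkseq alpha N.

Definition mu_distributed (R : realType) (Sigma : countType)
    (mu : seq Sigma -> R) (alpha : nat -> Sigma) : Prop :=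
  forall w : seq Sigma, w != [::] ->
    (fun N : nat => (occ w (prefix_of alpha N))%:R / N%:R) @ \oo --> mu w.

(* Position i (0-indexed) is selected by strategy S iff the preceding prefix
   alpha_1 ... alpha_{i-1} (= prefix_of alpha i) lies in S. *)
Definition selected (Sigma : Type) (S : seq Sigma -> Prop) (alpha : nat -> Sigma) (i : nat) : Prop :=
  S (prefix_of alpha i).

Definition postnikova (Sigma : countType) (w : seq Sigma) : seq Sigma -> Prop :=
  fun u => exists v : seq Sigma, u = v ++ w.

(* Main.v *)
Require Import Defs.
From HB Require Import structures.
From mathcomp Require Import all_boot all_order all_algebra.
From mathcomp Require Import all_classical all_reals all_analysis.
From mathcomp Require Import zify.
From mathcomp.algebra_tactics Require Import ring.
Set Warnings "-all".
Set Implicit Arguments. Unset Strict Implicit.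
Import Order.TTheory GRing.Theory Num.Theory.
Import numFieldNormedType.Exports.

Definition blk (T : Type) (al : nat -> T) (j k : nat) : seq T :=
  mkseq (fun t => al (j + t)%N) k.
Arguments blk {T}.

Lemma iota_shift j k : iota j k = map (addn j) (iota 0 k).
Proof. by rewrite -iotaDl addn0. Qed.

Lemma take_drop_mkseq (T : Type) (al : nat -> T) j k N :
  (j + k <= N)%N -> take k (drop j (mkseq al N)) = blk al j k.
Proof.
move=> H; rewrite /mkseq /blk -map_drop -map_take drop_iota take_iota.
have -> : minn k (N - j) = k by lia.
by rewrite add0n iota_shift -map_comp.
Qed.

Lemma occE (T : countType) (w : seq T) al N :
  occ w (prefix_of al N) =
  count (fun j => (j + size w <= N)%N && (blk al j (size w) == w)) (iota 0 N).
Proof.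
rewrite /occ /prefix_of size_mkseq; apply: eq_in_count => j _ /=.
by case: leqP => //= H; rewrite take_drop_mkseq.
Qed.

Lemma mkseq_split (T : Type) (al : nat -> T) k i : (k <= i)%N ->
  mkseq al i = mkseq al (i - k) ++ blk al (i - k) k.
Proof.
move=> H; rewrite /mkseq /blk -{1}(subnK H) iotaD map_cat add0n.
by rewrite [iota (i - k) k]iota_shift -map_comp.
Qed.

Lemma selectedE (T : countType) (w : seq T) al i :
  selected (postnikova w) al i <->
  (size w <= i)%N /\ blk al (i - size w) (size w) = w.
Proof.
rewrite /selected /postnikova /prefix_of; split.
- move=> [v Hv].
  have Hs : (size w <= i)%N by have := congr1 size Hv; rewrite size_mkseq size_cat => ->; lia.
  split => //; have Hsz := congr1 size Hv; move: Hv; rewrite (mkseq_split al Hs) => /eqP.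
  rewrite eqseq_cat; last by rewrite size_mkseq; move: Hsz; rewrite size_cat size_mkseq => ->; rewrite addnK.
  by case/andP => _ /eqP.
- move=> [Hs Hb]; exists (mkseq al (i - size w)); by rewrite -{2}Hb -mkseq_split.
Qed.

Lemma count_lt_prefix (p : pred nat) M N : (M <= N)%N ->
  count (fun j => (j < M)%N && p j) (iota 0 N) = count p (iota 0 M).
Proof.
move=> H; rewrite -(subnKC H) iotaD count_cat add0n.
rewrite (@eq_in_count _ _ p (iota 0 M)); last first.
  by move=> j; rewrite mem_iota add0n => Hj /=; have -> : (j < M)%N by lia.
rewrite (@eq_in_count _ _ pred0 (iota M _)) ?count_pred0 ?addn0 //.
by move=> j; rewrite mem_iota => Hj /=; have -> : (j < M)%N = false by lia.
Qed.

Lemma incr_mono (f : nat -> nat) : (forall n, (f n < f n.+1)%N) ->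
  forall m n, (f m < f n)%N = (m < n)%N.
Proof.
move=> Hf.
have H1 : forall m d, (f m + d <= f (m + d))%N.
  move=> m; elim=> [|d IH]; first by rewrite !addn0.
  by rewrite !addnS; exact: leq_ltn_trans IH (Hf _).
have H2 : forall m n, (m < n)%N -> (f m < f n)%N.
  move=> m n Hmn; have := H1 m.+1 (n - m.+1); rewrite subnKC //.
  move=> H3; have H4 := Hf m; lia.
move=> m n; apply/idP/idP; last exact: H2.
by apply: contraTT; rewrite -!leqNgt leq_eqVlt => /orP[/eqP->|/H2/ltnW].
Qed.

Lemma count_enum (P q : pred nat) (f : nat -> nat) :
  (forall n, (f n < f n.+1)%N) -> (forall j, P j <-> exists m, f m = j) ->
  forall n, count (fun j => P j && q j) (iota 0 (f n)) = count (fun m => q (f m)) (iota 0 n).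
Proof.
move=> Hf HP; have Hm := incr_mono Hf.
elim=> [|n IH].
  apply/eqP; rewrite -leqn0 leqNgt -has_count; apply/hasP => -[j].
  rewrite mem_iota /= => Hj /andP[/HP [m Hmj] _].
  by move: Hj; rewrite -Hmj Hm.
have Hle : (f n <= f n.+1)%N by apply: ltnW.
rewrite -(subnKC Hle) iotaD count_cat IH add0n.
have -> : (f n.+1 - f n = (f n.+1 - f n).-1.+1)%N by have := Hf n; lia.
have -> : iota 0 n.+1 = iota 0 n ++ [:: n] by rewrite -addn1 iotaD.
rewrite count_cat /= addn0.
have -> : P (f n) by apply/HP; exists n.
rewrite (@eq_in_count _ _ pred0 (iota (f n).+1 _)) ?count_pred0; last first.
  move=> j; rewrite mem_iota => /andP[H1 H2] /=; apply/negbTE/negP => /andP[/HP [m Hmj] _].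
  have Hh : (f n.+1 - f n).-1 = (f n.+1 - (f n).+1)%N by lia.
  move: H1 H2; rewrite Hh subnKC //; rewrite -Hmj !Hm; lia.
by rewrite addn0.
Qed.

Section Enum.
Variables (T : countType) (w : seq T) (al : nat -> T) (phi : nat -> nat).
Hypothesis wne : (0 < size w)%N.
Hypothesis phi_incr : forall n, (phi n < phi n.+1)%N.
Hypothesis phi_sel : forall i, selected (postnikova w) al i <-> exists n, phi n = i.

Let k := size w.
Let psi m := (phi m - k)%N.

Lemma phi_ge m : (k <= phi m)%N.
Proof. by have /selectedE[] : selected (postnikova w) al (phi m) by apply/phi_sel; exists m. Qed.

Lemma psi_incr n : (psi n < psi n.+1)%N.
Proof. rewrite /psi; have := phi_ge n; have := phi_ge n.+1; have := phi_incr n; lia. Qed.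

Lemma psi_sel j : (blk al j k == w) <-> exists m, psi m = j.
Proof.
split.
- move=> /eqP Hb; have : selected (postnikova w) al (j + k).
    by apply/selectedE; rewrite addnK; split => //; apply: leq_addl.
  by move=> /phi_sel [m Hm]; exists m; rewrite /psi Hm addnK.
- move=> [m <-]; have : selected (postnikova w) al (phi m) by apply/phi_sel; exists m.
  by move=> /selectedE [_ ->].
Qed.

Lemma occ_w_phi n : occ w (prefix_of al (phi n)) = n.+1.
Proof.
rewrite occE.
have Hg := phi_ge n.
rewrite (@eq_count _ _ (fun j => (j < (psi n).+1)%N && (blk al j k == w))); last first.
  move=> j /=; congr andb; rewrite /psi /k; lia.
rewrite count_lt_prefix; last by rewrite /psi; lia.
rewrite -addn1 iotaD count_cat add0n /=.
have -> : blk al (psi n) k == w by apply/psi_sel; exists n.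
have := @count_enum (fun j => blk al j k == w) predT psi psi_incr psi_sel n.
rewrite (@eq_count _ _ (fun j => blk al j k == w)); last by move=> j; rewrite andbT.
by move=> ->; rewrite count_predT size_iota addn0 addn1.
Qed.

Lemma occ_wa_phi a n :
  occ (w ++ [:: a]) (prefix_of al (phi n)) = occ [:: a] (prefix_of (al \o phi) n).
Proof.
rewrite !occE size_cat /= addn1.
have Hg := phi_ge n.
rewrite (@eq_count _ _ (fun j => (j < psi n)%N && ((blk al j k == w) && (al (j + k)%N == a)))); last first.
  move=> j /=; congr andb; first by rewrite /psi /k; lia.
  by rewrite /blk mkseqS -cats1 eqseq_cat ?size_mkseq //= eqseq_cons andbT.
have Hl : (psi n <= phi n)%N by rewrite /psi; lia.
apply: etrans; first exact: (@count_lt_prefix (fun j => (blk al j k == w) && (al (j+k)%N == a)) _ _ Hl).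
rewrite (@count_enum (fun j => blk al j k == w) (fun j => al (j + k)%N == a) psi psi_incr psi_sel n).
apply: eq_in_count => m; rewrite mem_iota add0n => Hm /=.
have -> : (m + 1 <= n)%N by lia.
by rewrite /psi /k subnK ?phi_ge //= /blk /= eqseq_cons andbT addn0.
Qed.

End Enum.

Lemma occ_mono (T : countType) (u v : seq T) b : (occ (u ++ [:: b]) v <= occ u v)%N.
Proof.
rewrite /occ; apply: sub_count => i /andP[H1 /eqP H2]; rewrite size_cat /= in H1 H2.
apply/andP; split; first lia.
by rewrite -(@take_takel _ (size u) (size u + 1)) ?leq_addr // H2 take_size_cat.
Qed.

Local Open Scope classical_set_scope.
Local Open Scope ring_scope.

Lemma mono_mu (R : realType) (T : countType) (mu : seq T -> R) al u b :
  mu_distributed mu al -> u != [::] -> mu (u ++ [:: b]) <= mu u.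
Proof.
move=> Hal Hu.
have Hub : u ++ [:: b] != [::] by case: u Hu.
apply: (ler_cvg_to (Hal _ Hub) (Hal _ Hu)).
near=> N; apply: ler_wpM2r; first by rewrite invr_ge0.
by rewrite ler_nat occ_mono.
Unshelve. all: end_near.
Qed.

Lemma find_w (R : realType) (T : countType) (mu : seq T -> R) al :
  prob_map mu -> mu_distributed mu al -> ~ bernoulli_induced mu ->
  exists w b, 0 < mu w /\ mu (w ++ [:: b]) != mu w * mu [:: b].
Proof.
move=> [Hm0 [Hm01 Hsum]] Hal Hnb; apply: contrapT => Hc; apply: Hnb.
have Hmul : forall w b, 0 < mu w -> mu (w ++ [:: b]) = mu w * mu [:: b].
  move=> w b Hw; apply/eqP; apply: contrapT => H; apply: Hc; exists w, b; split => //.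
  exact/negP.
exists (fun a => mu [:: a]); split; first by move=> a; apply: Hm01.
split.
  have := Hsum 1%N (leqnn _).
  rewrite (@reindex_esum _ _ _ [set: T] _ (fun a => [:: a])) //.
  split.
  - by move=> a _ /=.
  - by move=> a c _ _ [].
  - by move=> [|x [|y s]] //= _; exists x.
apply: last_ind => [//|u c IH _].
case: (eqVneq u [::]) => [->|Hu]; first by rewrite big_seq1.
rewrite -cats1 big_cat big_seq1 /= -IH //.
have H0 := Hm01 u Hu; case/andP: H0 => H0 _.
rewrite le_eqVlt in H0; case/orP: H0 => [/eqP H0|H0]; last exact: Hmul.
rewrite -H0 mul0r; apply/eqP; rewrite eq_le; apply/andP; split.
  by rewrite H0; exact: mono_mu Hal Hu.
have Huc : u ++ [:: c] != [::] by rewrite cats1 -size_eq0 size_rcons.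
by case/andP: (Hm01 _ Huc).
Qed.

Lemma inf_sel (R : realType) (T : countType) (mu : seq T -> R) al w :
  mu_distributed mu al -> w != [::] -> 0 < mu w ->
  forall m, exists i, (m <= i)%N /\ selected (postnikova w) al i.
Proof.
move=> Hal Hw Hpos m; apply: contrapT => Hn.
have Hs : forall i, selected (postnikova w) al i -> (i < m)%N.
  move=> i Hi; rewrite ltnNge; apply/negP => Hmi; apply: Hn; by exists i.
have Hb : forall N, (occ w (prefix_of al N) <= m)%N.
  move=> N; rewrite occE.
  apply: (@leq_trans (count (fun j => (j < m)%N && true) (iota 0 N))).
    apply: sub_count => j /andP[_ /eqP Hj]; rewrite andbT.
    have : selected (postnikova w) al (j + size w).
      by apply/selectedE; rewrite addnK; split => //; apply: leq_addl.
    move/Hs; lia.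
  case: (leqP m N) => HmN.
    by rewrite count_lt_prefix // count_predT size_iota.
  by apply: (leq_trans (count_size _ _)); rewrite size_iota ltnW.
have H1 := Hal w Hw; rewrite -cvg_shiftS in H1.
have H2 : (fun n : nat => m%:R * (@harmonic R n)) @ \oo --> (m%:R * 0 : R).
  apply: cvgM; [exact: cvg_cst | exact: cvg_harmonic].
have := ler_cvg_to H1 H2; rewrite mulr0 => /(_ _).
have : ~ (mu w <= 0) by rewrite leNgt Hpos.
move=> H3 H4; apply: H3; apply: H4.
near=> n; rewrite /harmonic /=; apply: ler_wpM2r; first by rewrite invr_ge0.
by rewrite ler_nat.
Unshelve. all: end_near.
Qed.

Lemma phi_geid (phi : nat -> nat) : (forall n, (phi n < phi n.+1)%N) ->
  forall n, (n <= phi n)%N.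
Proof. move=> H; elim=> [//|n IH]; exact: leq_ltn_trans IH (H n). Qed.

Lemma cvg_phi (R : realType) (u : nat -> R) (l : R) (phi : nat -> nat) :
  (forall n, (n <= phi n)%N) -> u @ \oo --> l -> (u \o phi) @ \oo --> l.
Proof.
move=> Hp Hu; apply: cvg_comp Hu.
move=> P [n _ Pn]; exists n => // m /= nm; apply: Pn; exact: leq_trans nm (Hp m).
Qed.

Lemma sel_eq (R : realType) (T : countType) (mu : seq T -> R) al w b phi :
  mu_distributed mu al -> w != [::] -> 0 < mu w ->
  (forall n, (phi n < phi n.+1)%N) ->
  (forall i, selected (postnikova w) al i <-> exists n, phi n = i) ->
  mu_distributed mu (al \o phi) -> mu (w ++ [:: b]) = mu w * mu [:: b].
Proof.
move=> Hal Hw Hpos Hinc Hsel Hd.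
have wne : (0 < size w)%N by rewrite lt0n size_eq0.
have Hge := phi_geid Hinc.
have Hp1 : forall n, (1 <= phi n)%N.
  move=> n; apply: leq_trans wne _; exact: (phi_ge Hsel).
pose X n := occ [:: b] (prefix_of (al \o phi) n).
have Hwb : w ++ [:: b] != [::] by rewrite cats1 -size_eq0 size_rcons.
have Ha := cvg_phi Hge (Hal _ Hwb).
have Hw1 := cvg_phi Hge (Hal _ Hw).
have Hh := Hd [:: b] isT.
have Hq : (fun n => (X n)%:R / n.+1%:R) @ \oo --> (mu (w ++ [:: b]) / mu w : R).
  apply: cvg_trans; last by apply: cvgM Ha (cvgV _ Hw1); rewrite gt_eqF.
  apply: near_eq_cvg; near=> n => /=.
  rewrite /X -(occ_wa_phi wne Hinc Hsel) (occ_w_phi wne Hinc Hsel).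
  have : (phi n)%:R != 0 :> R by rewrite pnatr_eq0 -lt0n Hp1.
  move=> H0; rewrite /unstable.inv_fun /=. field; by rewrite H0 andbT addrC natr1 pnatr_eq0.
have Hq2 : (fun n => (X n)%:R / n.+1%:R) @ \oo --> (mu [:: b] - mu [:: b] * 0 : R).
  apply: cvg_trans; last by apply: cvgB Hh (cvgM Hh (@cvg_harmonic R)).
  apply: near_eq_cvg; near=> n => /=.
  have Hn : n%:R != 0 :> R by rewrite pnatr_eq0 -lt0n; near: n; exact: nbhs_infty_gt.
  rewrite /X /harmonic /= !fctE /=; field; by rewrite Hn andbT addrC natr1 pnatr_eq0.
have := cvg_lim _ Hq; rewrite (cvg_lim _ Hq2) // mulr0 subr0 => ->; last by [].
rewrite mulrC mulfVK //; by rewrite gt_eqF.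
Unshelve. all: end_near.
Qed.

Local Close Scope ring_scope.
Local Close Scope classical_set_scope.
Unset Implicit Arguments.

(* S[alpha] is represented by the (unique) increasing enumeration phi of the
   selected positions; the selected subsequence is alpha \o phi. *)
Theorem lemma4p1 (R : realType) (Sigma : countType) (a0 : Sigma)
  (mu : seq Sigma -> R) :
  prob_map mu -> ~ bernoulli_induced mu ->
  exists w : seq Sigma,
    forall alpha : nat -> Sigma, mu_distributed mu alpha ->
      (forall m : nat, exists i : nat, (m <= i)%N /\ selected (postnikova w) alpha i) /\
      (forall phi : nat -> nat,
         (forall n, (phi n < phi n.+1)%N) ->
         (forall i, selected (postnikova w) alpha i <-> exists n, phi n = i) ->
         ~ mu_distributed mu (alpha \o phi)).
Proof.
move=> Hpm Hnb.
case: (pselect (exists al, mu_distributed mu al)) => [[al0 Hal0]|Hno]; last first.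
  by exists [::] => al Hal; exfalso; apply: Hno; exists al.
have [w [b [Hw Hwb]]] := find_w Hpm Hal0 Hnb.
have Hwne : w != [::].
  apply/negP => /eqP Hw0; move: Hwb; rewrite Hw0 /= (proj1 Hpm) GRing.mul1r.
  by rewrite eqxx.
exists w => al Hal; split; first exact: (inf_sel Hal Hwne Hw).
move=> phi Hinc Hsel Hd; move: Hwb; rewrite (sel_eq b Hal Hwne Hw Hinc Hsel Hd).
by rewrite eqxx.
Qed.
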